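(* Let $R=\bigoplus_{n\ge0}R_n$ be a standard graded Noetherian ring whose base ring $(R_0,\mathfrak m_0)$ is an Artinian local ring with infinite residue field. Let $M$ be a finitely generated graded $R$-module minimally generated by homogeneous elements of degrees $d_1\ge\cdots\ge d_s$. Then for any finite set $\mathcal P=\{\mathfrak p_1,\dots,\mathfrak p_n\}$ of homogeneous prime ideals of $R$ there exists a homogeneous element $x\in M$ of degree $d_1$ such that for all $1\le i\le n$, $$\mu\big((M/Rx)_{\mathfrak p_i}\big)=\max\{0,\ \mu(M_{\mathfrak p_i})-1\}.$$
   Context: Standard graded means $R=R_0[R_1]$, i.e. $R$ is generated as an $R_0$-algebra by finitely many elements of degree $1$. $\mu(N)$ denotes the minimal number of generators of a module $N$ over the local ring $R_{\mathfrak p}$. *)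

(* Defs.v *)
From mathcomp Require Import all_boot all_order all_algebra.
Set Implicit Arguments. Unset Strict Implicit. Unset Printing Implicit Defensive.
Import Order.TTheory GRing.Theory Num.Theory.
Local Open Scope ring_scope.

Section Defs.
Variable R : comNzRingType.

Definition is_ideal (I : R -> Prop) : Prop :=
  [/\ I 0, (forall a b, I a -> I b -> I (a + b)) & (forall r a, I a -> I (r * a))].

Definition is_prime_ideal (P : R -> Prop) : Prop :=
  [/\ is_ideal P, ~ P 1 & (forall a b, P (a * b) -> P a \/ P b)].

Definition in_ideal_span (k : nat) (g : 'I_k -> R) (r : R) : Prop :=
  exists c : 'I_k -> R, r = \sum_i c i * g i.

Definition noetherian : Prop :=
  forall I : R -> Prop, is_ideal I ->
    exists (k : nat) (g : 'I_k -> R), forall r, I r <-> in_ideal_span g r.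

(* Rg n is the degree-n part; R = (+)_{n >= 0} R_n internally *)
Definition graded_ring (Rg : nat -> R -> Prop) : Prop :=
  [/\ (forall n, Rg n 0) /\
      (forall n a b, Rg n a -> Rg n b -> Rg n (a - b)),
      Rg 0%N 1,
      (forall i j a b, Rg i a -> Rg j b -> Rg (i + j)%N (a * b)),
      (forall r, exists (N : nat) (a : nat -> R),
          (forall n, Rg n (a n)) /\ r = \sum_(n < N) a n) &
      (forall (N : nat) (a : nat -> R), (forall n, Rg n (a n)) ->
          \sum_(n < N) a n = 0 -> forall n, (n < N)%N -> a n = 0)].

(* standard graded: R is generated as an R_0-algebra by finitely many
   elements of degree 1 *)
Definition standard_graded (Rg : nat -> R -> Prop) : Prop :=
  exists (k : nat) (y : 'I_k -> R), (forall i, Rg 1%N (y i)) /\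
    forall S : R -> Prop,
      (forall a, Rg 0%N a -> S a) -> (forall i, S (y i)) ->
      (forall a b, S a -> S b -> S (a + b)) ->
      (forall a b, S a -> S b -> S (a * b)) ->
      forall r, S r.

Definition is_ideal0 (Rg : nat -> R -> Prop) (I : R -> Prop) : Prop :=
  [/\ (forall a, I a -> Rg 0%N a), I 0,
      (forall a b, I a -> I b -> I (a + b)) &
      (forall r a, Rg 0%N r -> I a -> I (r * a))].

Definition local0 (Rg : nat -> R -> Prop) (m0 : R -> Prop) : Prop :=
  is_ideal0 Rg m0 /\
  forall a, Rg 0%N a -> (~ m0 a <-> exists b, Rg 0%N b /\ a * b = 1).

Definition artinian0 (Rg : nat -> R -> Prop) : Prop :=
  forall I : nat -> R -> Prop, (forall n, is_ideal0 Rg (I n)) ->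
    (forall n a, I n.+1 a -> I n a) ->
    exists N, forall n, (N <= n)%N -> forall a, I n a <-> I N a.

(* the residue field R_0 / m0 is infinite *)
Definition infinite_residue (Rg : nat -> R -> Prop) (m0 : R -> Prop) : Prop :=
  exists f : nat -> R, (forall n, Rg 0%N (f n)) /\
    forall i j, m0 (f i - f j) -> i = j.

Definition homogeneous_ideal (Rg : nat -> R -> Prop) (P : R -> Prop) : Prop :=
  forall (N : nat) (a : nat -> R), (forall n, Rg n (a n)) ->
    P (\sum_(n < N) a n) -> forall n, (n < N)%N -> P (a n).

Variable M : lmodType R.

(* graded R-module M = (+)_{k in Z} M_k internally *)
Definition graded_module (Rg : nat -> R -> Prop) (Mg : int -> M -> Prop) : Prop :=
  [/\ (forall k, Mg k 0),
      (forall k a b, Mg k a -> Mg k b -> Mg k (a - b)),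
      (forall i j r m, Rg i r -> Mg j m -> Mg (i%:Z + j) (r *: m)),
      (forall m, exists (ks : seq int) (a : int -> M),
          (forall k, Mg k (a k)) /\ m = \sum_(k <- ks) a k) &
      (forall (ks : seq int) (a : int -> M), uniq ks -> (forall k, Mg k (a k)) ->
          \sum_(k <- ks) a k = 0 -> forall k, k \in ks -> a k = 0)].

Definition in_mspan (k : nat) (g : 'I_k -> M) (m : M) : Prop :=
  exists c : 'I_k -> R, m = \sum_i c i *: g i.

Definition minimal_generators (k : nat) (g : 'I_k -> M) : Prop :=
  (forall m, in_mspan g m) /\
  forall i : 'I_k, exists m, ~ exists c : 'I_k -> R,
      c i = 0 /\ m = \sum_j c j *: g j.

Definition in_mspan_seq (gs : seq M) (m : M) : Prop :=
  exists c : seq R, m = \sum_(i < size gs) c`_i *: gs`_i.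

(* The localization (M / <hs>)_p is generated over R_p by k elements.
   Generators may be taken as images of elements of M; then the images of
   g_1..g_k generate (M/<hs>)_p iff every m in M satisfies s*m in
   <g_1..g_k, hs> for some s not in p. *)
Definition loc_quot_generated (p : R -> Prop) (hs : seq M) (k : nat) : Prop :=
  exists g : seq M, size g = k /\
    forall m : M, exists s : R, ~ p s /\ in_mspan_seq (g ++ hs) (s *: m).

Definition mu_loc_quot (p : R -> Prop) (hs : seq M) (k : nat) : Prop :=
  loc_quot_generated p hs k /\
  forall k', loc_quot_generated p hs k' -> (k <= k')%N.

End Defs.

(* Main.v *)
Require Import Defs.
From mathcomp Require Import all_boot all_order all_algebra.
From Stdlib Require Import Classical IndefiniteDescription.
Import Order.TTheory GRing.Theory Num.Theory.
Local Open Scope ring_scope.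
Set Implicit Arguments. Unset Strict Implicit. Unset Printing Implicit Defensive.


Section Span.
Variable R : comNzRingType.
Variable M : lmodType R.

Fixpoint spanP (Q : R -> Prop) (gs : seq M) (m : M) : Prop :=
  match gs with
  | [::] => m = 0
  | a :: l => exists r m', Q r /\ spanP Q l m' /\ m = r *: a + m'
  end.

Definition Tr : R -> Prop := fun _ => True.

Lemma in_mspan_seqE gs m : in_mspan_seq gs m <-> spanP Tr gs m.
Proof.
elim: gs m => [|a l IH] m /=.
  by split; [case=> c ->; rewrite big_ord0 | move=> ->; exists [::]; rewrite big_ord0].
split.
  case=> c ->; rewrite big_ord_recl /=.
  exists c`_0, (\sum_(i < size l) (behead c)`_i *: l`_i); split=> //; split.
    by apply/IH; exists (behead c).
  congr (_ + _); apply: eq_bigr => i _; by rewrite /bump /= nth_behead.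
case=> r [m' [_ [/IH [c ->] ->]]].
exists (r :: c); rewrite big_ord_recl /=; congr (_ + _).
Qed.

Variable Q : R -> Prop.
Hypothesis Q0 : Q 0.
Hypothesis QD : forall a b, Q a -> Q b -> Q (a + b).
Hypothesis QM : forall r a, Q a -> Q (r * a).

Lemma spanP0 gs : spanP Q gs 0.
Proof. elim: gs => [|a l IH] //=; exists 0, 0; split=> //; split=> //; by rewrite scale0r addr0. Qed.

Lemma spanPD gs a b : spanP Q gs a -> spanP Q gs b -> spanP Q gs (a + b).
Proof.
elim: gs a b => [|v l IH] a b /=; first by move=> -> ->; rewrite addr0.
case=> r [m [Qr [Hm ->]]] [r' [m' [Qr' [Hm' ->]]]].
exists (r + r'), (m + m'); split; first exact: QD.
split; first exact: IH.
by rewrite scalerDl -!addrA; congr (_ + _); rewrite addrCA.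
Qed.

Lemma spanPZ gs c a : spanP Q gs a -> spanP Q gs (c *: a).
Proof.
elim: gs a => [|v l IH] a /=; first by move=> ->; rewrite scaler0.
case=> r [m [Qr [Hm ->]]]; exists (c * r), (c *: m); split; first exact: QM.
split; first exact: IH.
by rewrite scalerDr scalerA.
Qed.

Lemma spanPN gs a : spanP Q gs a -> spanP Q gs (- a).
Proof. by move=> H; rewrite -scaleN1r; apply: spanPZ. Qed.

Lemma spanPB gs a b : spanP Q gs a -> spanP Q gs b -> spanP Q gs (a - b).
Proof. by move=> Ha Hb; apply: spanPD => //; apply: spanPN. Qed.

Lemma spanP_cat gs1 gs2 m :
  spanP Q (gs1 ++ gs2) m <->
  exists m1 m2, spanP Q gs1 m1 /\ spanP Q gs2 m2 /\ m = m1 + m2.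
Proof.
elim: gs1 m => [|a l IH] m /=.
  split; first by move=> H; exists 0, m; rewrite add0r.
  by case=> m1 [m2 [-> [H ->]]]; rewrite add0r.
split.
  case=> r [m' [Qr [/IH [m1 [m2 [H1 [H2 ->]]]] ->]]].
  exists (r *: a + m1), m2; split; last by rewrite addrA.
  by exists r, m1.
case=> m1 [m2 [[r [m' [Qr [H' ->]]]] [H2 ->]]].
exists r, (m' + m2); split=> //; split; last by rewrite addrA.
by apply/IH; exists m', m2.
Qed.

Lemma spanP_catl gs1 gs2 m : spanP Q gs1 m -> spanP Q (gs1 ++ gs2) m.
Proof. by move=> H; apply/spanP_cat; exists m, 0; rewrite addr0; split=> //; split=> //; apply: spanP0. Qed.

Lemma spanP_catr gs1 gs2 m : spanP Q gs2 m -> spanP Q (gs1 ++ gs2) m.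
Proof. by move=> H; apply/spanP_cat; exists 0, m; rewrite add0r; split=> //; apply: spanP0. Qed.

End Span.

Lemma spanP_mem (R : comNzRingType) (M : lmodType R) gs (a : M) : a \in gs -> spanP (@Tr R) gs a.
Proof.
elim: gs => [|v l IH] //=; rewrite inE; case/orP=> [/eqP ->|/IH H].
  by exists 1, 0; rewrite scale1r addr0; split=> //; split=> //; apply: spanP0.
by exists 0, a; rewrite scale0r add0r.
Qed.

Lemma spanP_weak (R : comNzRingType) (M : lmodType R) (Q Q' : R -> Prop) gs (a : M) :
  (forall r, Q r -> Q' r) -> spanP Q gs a -> spanP Q' gs a.
Proof.
move=> HQ; elim: gs a => [|v l IH] a //=.
by case=> r [m [Qr [Hm ->]]]; exists r, m; split; [apply: HQ|split=> //; apply: IH].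
Qed.


Section Loc.
Variable R : comNzRingType.
Variable M : lmodType R.
Variable P : R -> Prop.
Hypothesis HP : is_prime_ideal P.

Definition PM (m : M) := exists gs, spanP P gs m.
Definition NP (m : M) := exists t, ~ P t /\ PM (t *: m).
Definition LocSpan (hs : seq M) (m : M) := exists s, ~ P s /\ spanP (@Tr R) hs (s *: m).

Lemma P0 : P 0. Proof. by case: HP => -[]. Qed.
Lemma PD a b : P a -> P b -> P (a + b). Proof. by case: HP => -[] _ H _ _ _; apply: H. Qed.
Lemma PMl r a : P a -> P (r * a). Proof. by case: HP => -[] _ _ H _ _; apply: H. Qed.
Lemma PMr r a : P a -> P (a * r). Proof. by rewrite mulrC; apply: PMl. Qed.
Lemma P1 : ~ P 1. Proof. by case: HP. Qed.
Lemma Pprime a b : P (a * b) -> P a \/ P b. Proof. by case: HP => _ _ H; apply: H. Qed.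
Lemma Pmul_not a b : ~ P a -> ~ P b -> ~ P (a * b).
Proof. by move=> Ha Hb /Pprime []. Qed.
Lemma PN a : P a -> P (- a). Proof. by move=> H; rewrite -mulN1r; apply: PMl. Qed.
Lemma PB a b : P a -> P b -> P (a - b). Proof. by move=> Ha Hb; apply: PD => //; apply: PN. Qed.
Lemma notP_sub a b : ~ P a -> P b -> ~ P (a - b).
Proof. move=> Ha Hb H; apply: Ha; have := PD H Hb; by rewrite subrK. Qed.

Lemma TrD (a b : R) : Tr a -> Tr b -> Tr (a + b). Proof. by []. Qed.
Lemma TrM (r a : R) : Tr a -> Tr (r * a). Proof. by []. Qed.


Lemma tP0 gs : spanP (@Tr R) gs (0 : M). Proof. exact: (spanP0 (Q:=@Tr R)). Qed.
Lemma tPD gs (a b : M) : spanP (@Tr R) gs a -> spanP (@Tr R) gs b -> spanP (@Tr R) gs (a + b). Proof. exact: (spanPD (@TrD)). Qed.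
Lemma tPZ gs c (a : M) : spanP (@Tr R) gs a -> spanP (@Tr R) gs (c *: a). Proof. exact: (spanPZ (@TrM)). Qed.
Lemma tPB gs (a b : M) : spanP (@Tr R) gs a -> spanP (@Tr R) gs b -> spanP (@Tr R) gs (a - b). Proof. exact: (spanPB (@TrD) (@TrM)). Qed.
Lemma tPcatl gs1 gs2 (m : M) : spanP (@Tr R) gs1 m -> spanP (@Tr R) (gs1 ++ gs2) m. Proof. exact: (spanP_catl (Q:=@Tr R)). Qed.
Lemma tPcatr gs1 gs2 (m : M) : spanP (@Tr R) gs2 m -> spanP (@Tr R) (gs1 ++ gs2) m. Proof. exact: (spanP_catr (Q:=@Tr R)). Qed.
Lemma pP0 gs : spanP P gs (0 : M). Proof. exact: spanP0 P0 gs. Qed.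
Lemma pPD gs (a b : M) : spanP P gs a -> spanP P gs b -> spanP P gs (a + b). Proof. move=> Ha Hb; apply: (spanPD (Q:=P)) Ha Hb; exact: PD. Qed.
Lemma pPZ gs c (a : M) : spanP P gs a -> spanP P gs (c *: a). Proof. move=> Ha; apply: (spanPZ (Q:=P)) Ha; exact: PMl. Qed.
Lemma pPcat gs1 gs2 (m : M) : spanP P (gs1 ++ gs2) m <->
  exists m1 m2, spanP P gs1 m1 /\ spanP P gs2 m2 /\ m = m1 + m2. Proof. exact: spanP_cat. Qed.

Lemma PM0 : PM 0. Proof. by exists [::]. Qed.
Lemma PMD a b : PM a -> PM b -> PM (a + b).
Proof.
case=> g1 H1 [g2 H2]; exists (g1 ++ g2); apply/pPcat.
by exists a, b.
Qed.
Lemma PMZ r a : PM a -> PM (r *: a).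
Proof. by case=> g H; exists g; apply: pPZ. Qed.
Lemma PMB a b : PM a -> PM b -> PM (a - b).
Proof. by move=> Ha Hb; apply: PMD => //; rewrite -scaleN1r; apply: PMZ. Qed.
Lemma PM_gen r a : P r -> PM (r *: a).
Proof. by move=> Hr; exists [:: a]; exists r, 0; rewrite addr0. Qed.

Lemma NP_PM m : PM m -> NP m.
Proof. by move=> H; exists 1; rewrite scale1r; split=> //; exact P1. Qed.

Lemma NPD a b : NP a -> NP b -> NP (a + b).
Proof.
case=> t [Ht Ha] [t' [Ht' Hb]]; exists (t * t'); split; first exact: Pmul_not.
rewrite scalerDr; apply: PMD.
  by rewrite mulrC -scalerA; apply: PMZ.
by rewrite -scalerA; apply: PMZ.
Qed.
Lemma NPZ r a : NP a -> NP (r *: a).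
Proof. case=> t [Ht Ha]; exists t; split=> //; rewrite scalerA mulrC -scalerA; exact: PMZ. Qed.
Lemma NPB a b : NP a -> NP b -> NP (a - b).
Proof. by move=> Ha Hb; apply: NPD => //; rewrite -scaleN1r; apply: NPZ. Qed.
Lemma NP_sat r a : ~ P r -> NP (r *: a) -> NP a.
Proof. move=> Hr [t [Ht H]]; exists (t * r); split; [exact: Pmul_not|by rewrite -scalerA]. Qed.

Lemma LocSpan_span gs hs z : (forall v, v \in gs -> LocSpan hs v) ->
  spanP (@Tr R) gs z -> exists u, ~ P u /\ spanP (@Tr R) hs (u *: z).
Proof.
elim: gs z => [|a l IH] z Hv /=.
  move=> ->; exists 1; split; first exact P1; rewrite scaler0; exact: tP0.
case=> r [z' [_ [Hz' ->]]].
have Hv' : forall v, v \in l -> LocSpan hs v by move=> v hv; apply: Hv; rewrite inE hv orbT.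
have [u' [Hu' Hs']] := IH z' Hv' Hz'.
have [s [Hs Ha]] := Hv a (mem_head _ _).
exists (u' * s); split; first exact: Pmul_not.
rewrite scalerDr; apply: tPD.
  rewrite scalerA mulrC -scalerA -scalerA; apply: tPZ; apply: tPZ => //.
by rewrite mulrC -scalerA; apply: tPZ.
Qed.

Lemma LocSpan_trans gs hs m : (forall v, v \in gs -> LocSpan hs v) ->
  LocSpan gs m -> LocSpan hs m.
Proof.
move=> Hv [s [Hs H]]; have [u [Hu H']] := LocSpan_span Hv H.
by exists (u * s); split; [exact: Pmul_not|rewrite -scalerA].
Qed.

Lemma LocSpan_mem hs v : v \in hs -> LocSpan hs v.
Proof. by move=> H; exists 1; split; [exact P1|rewrite scale1r; apply: spanP_mem]. Qed.

Lemma lqg_LocSpan hs k : loc_quot_generated P hs k <->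
  exists g, size g = k /\ forall m, LocSpan (g ++ hs) m.
Proof.
split; case=> g [Hg H]; exists g; split=> // m; have [s [Hs Hm]] := H m;
  exists s; split=> //; exact/in_mspan_seqE.
Qed.

Lemma PM_loc h m : (forall v, LocSpan h v) -> PM m ->
  exists u, ~ P u /\ spanP P h (u *: m).
Proof.
move=> Hgen [gs]; elim: gs m => [|a l IH] m /=.
  move=> ->; exists 1; split; first exact P1; rewrite scaler0; apply: pP0.
case=> p [m' [Pp [Hm' ->]]].
have [u' [Hu' H']] := IH m' Hm'.
have [s [Hs Ha]] := Hgen a.
have HPa : spanP P h (p *: (s *: a)).
  elim: (h) (s *: a) Ha => [|v l' IH'] z /=; first by move=> ->; rewrite scaler0.
  case=> r [z' [_ [Hz' ->]]]; exists (p * r), (p *: z'); split; first exact: PMr.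
  by split; [exact: IH'|rewrite scalerDr scalerA].
exists (u' * s); split; first exact: Pmul_not.
rewrite scalerDr; apply: pPD.
  rewrite scalerA -mulrA (mulrC s p) mulrA -scalerA -scalerA.
  by apply: pPZ.
by rewrite mulrC -scalerA; apply: pPZ.
Qed.

(* Nakayama via minimality *)
Lemma nakayama k : mu_loc_quot P (@nil M) k -> (0 < k)%N -> exists m, ~ NP m.
Proof.
case=> /lqg_LocSpan [h [Hh Hgen]] Hmin Hk.
apply: NNPP => Hall.
have Hall' : forall m, NP m.
  move=> m; apply: NNPP => Hm; apply: Hall; by exists m.
rewrite cats0 in Hgen.
case: h Hh Hgen => [|a l] Hh Hgen; first by rewrite -Hh in Hk.
have [t [Ht Ha]] := Hall' a.
have [u [Hu H]] := PM_loc Hgen Ha.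
case: H => p [m' [Pp [Hm' Heq]]].
have Hla : LocSpan l a.
  exists (u * t - p); split; first exact: notP_sub (Pmul_not Hu Ht) Pp.
  rewrite scalerBl -scalerA Heq addrC addKr.
  by apply: spanP_weak Hm'.
have : loc_quot_generated P (@nil M) (size l).
  apply/lqg_LocSpan; exists l; split=> // m; rewrite cats0.
  apply: LocSpan_trans (Hgen m) => v; rewrite inE; case/orP=> [/eqP ->|]//.
  exact: LocSpan_mem.
move/Hmin; by rewrite -Hh ltnn.
Qed.

Lemma exchange x (t : R) : ~ NP x -> ~ P t -> forall h acc v w,
  spanP (@Tr R) h v -> spanP P acc w -> t *: x = v + w ->
  exists h', (size h').+1 = size h /\
    forall a, a \in h -> LocSpan (acc ++ h' ++ [:: x]) a.
Proof.
move=> Hx Ht; elim=> [|a l IH] acc v w /=.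
  move=> -> Hw; rewrite add0r => Heq; exfalso; apply: Hx; exists t; split=> //.
  by rewrite Heq; exists acc.
case=> r [v' [_ [Hv' ->]]] Hw Heq.
case: (classic (P r)) => Pr.
  case: l IH Hv' Heq => [|b l] IH Hv' Heq.
    exfalso; apply: Hx; exists t; split=> //; rewrite Heq; move: Hv' => /= ->.
    rewrite addr0; apply: PMD; [exact: PM_gen|by exists acc].
  have Hw' : spanP P (acc ++ [:: a]) (w + r *: a).
    apply/pPcat; exists w, (r *: a); split=> //; split=> //.
    by exists r, 0; rewrite addr0.
  have Heq' : t *: x = v' + (w + r *: a) by rewrite Heq -addrA addrCA [r *: a + w]addrC.
  have [h'' [Hs Hl]] := IH _ _ _ Hv' Hw' Heq'.
  exists (a :: h''); split; first by rewrite /= Hs.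
  move=> c; rewrite inE; case/orP=> [/eqP ->|Hc].
    apply: LocSpan_mem; by rewrite mem_cat /= mem_head orbT.
  by have := Hl c Hc; rewrite -catA.
exists l; split=> // c; rewrite inE; case/orP=> [/eqP ->|Hc]; last first.
  by apply: LocSpan_mem; rewrite !mem_cat Hc orbT.
exists r; split=> //.
have -> : r *: a = t *: x - v' - w by rewrite Heq (addrAC (r *: a)) addrK addrK.
apply: tPB.
  apply: tPB.
    apply: tPcatr; apply: tPcatr; apply: tPZ; apply: spanP_mem; exact: mem_head.
  by apply: tPcatr; apply: tPcatl.
apply: tPcatl; exact: spanP_weak Hw.
Qed.

Lemma mu_step k (x : M) : mu_loc_quot P (@nil M) k -> ~ NP x -> mu_loc_quot P [:: x] k.-1.
Proof.
case=> /lqg_LocSpan [h [Hh Hgen]] Hmin Hx.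
rewrite cats0 in Hgen.
have [s [Hs Hsx]] := Hgen x.
have [h' [Hh' Hl]] := exchange Hx Hs (acc := [::]) Hsx (pP0 [::]) (esym (addr0 _)).
split.
  apply/lqg_LocSpan; exists h'; split; first by rewrite -Hh -Hh'.
  move=> m; exact: LocSpan_trans Hl (Hgen m).
move=> k' /lqg_LocSpan [g' [Hg' Hgen']].
have : loc_quot_generated P (@nil M) k'.+1.
  apply/lqg_LocSpan; exists (g' ++ [:: x]); split; first by rewrite size_cat Hg' addn1.
  by move=> m; rewrite cats0.
move/Hmin; by case: (k) => //= n; rewrite ltnS.
Qed.

Lemma mu_zero (x : M) : mu_loc_quot P (@nil M) 0 -> mu_loc_quot P [:: x] 0.
Proof.
case=> /lqg_LocSpan [h [Hh Hgen]] _; split; last by [].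
apply/lqg_LocSpan; exists [::]; split=> // m.
case: h Hh Hgen => // _ Hgen; have [s [Hs Hm]] := Hgen m.
exists s; split=> //; move: Hm => /= ->. by exists 0, 0; rewrite scale0r addr0.
Qed.
End Loc.


Section GradedR.
Variable R : comNzRingType.
Variable Rg : nat -> R -> Prop.
Hypothesis HR : graded_ring Rg.

Lemma Rg0 n : Rg n 0. Proof. by case: HR => -[H _]. Qed.
Lemma RgB n a b : Rg n a -> Rg n b -> Rg n (a - b). Proof. by case: HR => -[_ H] _ _ _ _; apply: H. Qed.
Lemma Rg1 : Rg 0 1. Proof. by case: HR. Qed.
Lemma RgM i j a b : Rg i a -> Rg j b -> Rg (i + j)%N (a * b). Proof. by case: HR => _ _ H _ _; apply: H. Qed.
Lemma RgN n a : Rg n a -> Rg n (- a). Proof. by move=> H; rewrite -sub0r; apply: RgB => //; apply: Rg0. Qed.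
Lemma RgD n a b : Rg n a -> Rg n b -> Rg n (a + b).
Proof. by move=> Ha Hb; rewrite -(opprK b); apply: RgB => //; apply: RgN. Qed.
Lemma RgM0 a b : Rg 0 a -> Rg 0 b -> Rg 0 (a * b). Proof. exact: (@RgM 0 0). Qed.
Lemma RgX r e : Rg 1 r -> Rg e (r ^+ e).
Proof. move=> Hr; elim: e => [|e IH]; first exact: Rg1. by rewrite exprS; apply: (@RgM 1 e). Qed.
Lemma RgX0 r e : Rg 0 r -> Rg 0 (r ^+ e).
Proof. move=> Hr; elim: e => [|e IH]; first exact: Rg1. by rewrite exprS; apply: RgM0. Qed.

Variable m0 : R -> Prop.
Hypothesis Hloc : local0 Rg m0.

Lemma m0_Rg a : m0 a -> Rg 0 a. Proof. by case: Hloc => -[H _ _ _] _; apply: H. Qed.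
Lemma m0_add a b : m0 a -> m0 b -> m0 (a + b). Proof. by case: Hloc => -[_ _ H _] _; apply: H. Qed.
Lemma m0_mul r a : Rg 0 r -> m0 a -> m0 (r * a). Proof. by case: Hloc => -[_ _ _ H] _; apply: H. Qed.
Lemma unit0 a : Rg 0 a -> ~ m0 a -> exists b, Rg 0 b /\ a * b = 1.
Proof. by case: Hloc => _ H Ha; apply: (proj1 (H a Ha)). Qed.
Lemma notm0_1 : ~ m0 1.
Proof. by case: Hloc => _ H; apply: (proj2 (H 1 Rg1)); exists 1; rewrite mulr1; split=> //; exact: Rg1. Qed.
Lemma unit_notm0 a b : Rg 0 a -> Rg 0 b -> a * b = 1 -> ~ m0 a.
Proof. by case: Hloc => _ H Ha Hb Hab; apply: (proj2 (H a Ha)); exists b. Qed.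
Lemma notm0_1sub a : m0 a -> ~ m0 (1 - a).
Proof. by move=> Ha H; apply: notm0_1; have := m0_add H Ha; rewrite subrK. Qed.

Hypothesis Hart : artinian0 Rg.

Lemma m0_in_prime (P : R -> Prop) a : is_prime_ideal P -> m0 a -> P a.
Proof.
move=> HP Ha; have Ra := m0_Rg Ha.
pose I n b := exists c, Rg 0 c /\ b = c * a ^+ n.
have HI : forall n, is_ideal0 Rg (I n).
  move=> n; split.
  - by move=> b [c [Hc ->]]; apply: RgM0 => //; apply: RgX0.
  - by exists 0; rewrite mul0r; split=> //; exact: Rg0.
  - by move=> b b' [c [Hc ->]] [c' [Hc' ->]]; exists (c + c'); rewrite mulrDl; split=> //; apply: RgD.
  - by move=> r b Hr [c [Hc ->]]; exists (r * c); rewrite mulrA; split=> //; apply: RgM0.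
have Hdec : forall n b, I n.+1 b -> I n b.
  by move=> n b [c [Hc ->]]; exists (c * a); rewrite exprS mulrA; split=> //; apply: RgM0.
have [N HN] := Hart HI Hdec.
have : I N.+1 (a ^+ N).
  apply/(HN N.+1 (leqnSn N)); by exists 1; rewrite mul1r; split=> //; exact: Rg1.
case=> c [Hc Heq].
have Hca : m0 (c * a) by apply: m0_mul.
have [u [Hu Hu1]] := unit0 (RgB Rg1 (m0_Rg Hca)) (notm0_1sub Hca).
have H0 : a ^+ N = 0.
  have : a ^+ N * (1 - c * a) = 0 by rewrite mulrBr mulr1 mulrCA -exprSr -Heq subrr.
  by move=> H; rewrite -[a ^+ N]mulr1 -Hu1 mulrA H mul0r.
have : P (a ^+ N) by rewrite H0; exact: P0 HP.
elim: (N) => [|e IH]; first by rewrite expr0 => /(P1 HP).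
rewrite exprS => /(Pprime HP) [] //.
Qed.

End GradedR.


Section GradedM.
Variable R : comNzRingType.
Variable Rg : nat -> R -> Prop.
Variable M : lmodType R.
Variable Mg : int -> M -> Prop.
Hypothesis HM : graded_module Rg Mg.

Lemma Mg0 k : Mg k 0. Proof. by case: HM. Qed.
Lemma MgB k a b : Mg k a -> Mg k b -> Mg k (a - b). Proof. by case: HM => _ H _ _ _; apply: H. Qed.
Lemma MgZ i j r m : Rg i r -> Mg j m -> Mg (i%:Z + j) (r *: m). Proof. by case: HM => _ _ H _ _; apply: H. Qed.
Lemma MgD k a b : Mg k a -> Mg k b -> Mg k (a + b).
Proof. move=> Ha Hb; have -> : a + b = a - (0 - b) by rewrite sub0r opprK. by apply: MgB => //; apply: MgB => //; apply: Mg0. Qed.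
Lemma MgZ0 j r m : Rg 0 r -> Mg j m -> Mg j (r *: m).
Proof. by move=> Hr Hm; have := MgZ Hr Hm; rewrite add0r. Qed.
Lemma Mg_sum k (I : Type) (s : seq I) (Q : pred I) (F : I -> M) :
  (forall i, Q i -> Mg k (F i)) -> Mg k (\sum_(i <- s | Q i) F i).
Proof. move=> H; apply: big_ind => //; [exact: Mg0|exact: MgD]. Qed.

Lemma Mg_proj (T : finType) (deg : T -> int) (w : T -> M) D v :
  (forall t, Mg (deg t) (w t)) -> Mg D v -> v = \sum_t w t ->
  v = \sum_(t | deg t == D) w t.
Proof.
move=> Hw Hv Hsum.
pose ks := undup (D :: map deg (enum T)).
have Uks : uniq ks by apply: undup_uniq.
pose e k := \sum_(t | deg t == k) w t - (if k == D then v else 0).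
have He : forall k, Mg k (e k).
  move=> k; apply: MgB; first by apply: Mg_sum => t /eqP <-.
  by case: eqP => [->|_] //; apply: Mg0.
have Hsel : forall x, x \in ks -> forall (F : int -> M),
    \sum_(k <- ks | x == k) F k = F x.
  move=> x Hx F; rewrite -big_filter.
  have -> : [seq k <- ks | x == k] = [:: x].
    by rewrite -(filter_pred1_uniq Uks Hx); apply: eq_filter => k /=; rewrite eq_sym.
  by rewrite big_seq1.
have Hdeg : forall t, deg t \in ks.
  by move=> t; rewrite mem_undup inE map_f ?orbT // mem_enum.
have HD : D \in ks by rewrite mem_undup mem_head.
have H0 : \sum_(k <- ks) e k = 0.
  rewrite sumrB.
  have -> : \sum_(k <- ks) \sum_(t | deg t == k) w t = \sum_t w t.
    under eq_bigr do rewrite big_mkcond.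
    rewrite exchange_big /=; apply: eq_bigr => t _.
    by rewrite -big_mkcond /= Hsel.
  have -> : \sum_(k <- ks) (if k == D then v else 0) = v.
    by rewrite -big_mkcond /=; under eq_bigl do rewrite eq_sym; rewrite Hsel.
  by rewrite -Hsum subrr.
have := (match HM with And5 _ _ _ _ H => H end) ks e Uks He H0 D HD.
by rewrite /e eqxx => /eqP; rewrite subr_eq0 => /eqP.
Qed.

End GradedM.


Section Cases.
Variable R : comNzRingType.
Variable Rg : nat -> R -> Prop.
Variable m0 : R -> Prop.
Variable M : lmodType R.
Variable Mg : int -> M -> Prop.
Variable s : nat.
Variable g : 'I_s.+1 -> M.
Variable d : 'I_s.+1 -> int.
Variable P : R -> Prop.
Hypothesis HR : graded_ring Rg.
Hypothesis HS : standard_graded Rg.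
Hypothesis Hloc : local0 Rg m0.
Hypothesis Hart : artinian0 Rg.
Hypothesis HM : graded_module Rg Mg.
Hypothesis Hg : forall i, Mg (d i) (g i).
Hypothesis Hord : forall i j : 'I_s.+1, (i <= j)%N -> d j <= d i.
Hypothesis Hmin : minimal_generators g.
Hypothesis HP : is_prime_ideal P.
Hypothesis HPh : homogeneous_ideal Rg P.

Lemma decomp0 : (forall a, Rg 1 a -> P a) -> forall t, exists t0, Rg 0 t0 /\ P (t - t0).
Proof.
move=> H1; case: HS => k [y [Hy Hind]]; apply: Hind.
- by move=> a Ha; exists a; rewrite subrr; split=> //; exact: P0 HP.
- move=> i; exists 0; rewrite subr0; split; last by apply: H1. have := Rg0 HR 0. done.
- move=> a b [a0 [Ha0 Ha]] [b0 [Hb0 Hb]]; exists (a0 + b0); split; first exact: RgD.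
  by rewrite opprD addrACA; apply: PD.
- move=> a b [a0 [Ha0 Ha]] [b0 [Hb0 Hb]]; exists (a0 * b0); split; first exact: RgM0.
  have -> : a * b - a0 * b0 = (a - a0) * b + a0 * (b - b0).
    by rewrite mulrBl mulrBr addrA subrK.
  by apply: PD => //; [apply: PMr|apply: PMl].
Qed.

Lemma gen_index m : exists c : 'I_s.+1 -> R, m = \sum_j c j *: g j.
Proof. by case: Hmin => H _; apply: H. Qed.

Lemma PM_index m : PM P m -> exists a : 'I_s.+1 -> R, (forall j, P (a j)) /\ m = \sum_j a j *: g j.
Proof.
case=> gs; elim: gs m => [|v l IH] m /=.
  move=> ->; exists (fun _ => 0); split=> [j|]; first exact: P0 HP.
  by rewrite big1 // => j _; rewrite scale0r.
case=> p [m' [Pp [Hm' ->]]].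
have [a [Ha ->]] := IH _ Hm'.
have [c ->] := gen_index v.
exists (fun j => p * c j + a j); split=> [j|]; first by apply: PD => //; apply: PMr.
rewrite scaler_sumr -big_split /=; apply: eq_bigr => j _.
by rewrite scalerDl scalerA.
Qed.


Lemma notP_exp r e : ~ P r -> ~ P (r ^+ e).
Proof.
move=> Hr; elim: e => [|e IH]; first by rewrite expr0; exact: P1 HP.
by rewrite exprS; apply: Pmul_not.
Qed.

Lemma case1 r : Rg 1 r -> ~ P r -> (exists m : M, ~ NP P m) ->
  exists y, Mg (d ord0) y /\ ~ NP P y.
Proof.
move=> Hr NPr [m Hm]; apply: NNPP => Hno.
have Hall : forall y, Mg (d ord0) y -> NP P y.
  by move=> y Hy; apply: NNPP => Hy'; apply: Hno; exists y.
apply: Hm.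
have Hgj : forall j, NP P (g j).
  move=> j; have Hle := Hord (i := ord0) (j := j) (leq0n j).
  pose e := `|d ord0 - d j|%N.
  have He : (e%:Z + d j) = d ord0 by rewrite /e gez0_abs ?subrK // subr_ge0.
  have Hy := MgZ HM (RgX HR e Hr) (Hg j); rewrite He in Hy.
  apply: (NP_sat HP (r := r ^+ e)); first exact: notP_exp.
  exact: Hall.
have [c ->] := gen_index m.
apply: big_ind.
- by apply: NP_PM; [exact: HP|exists [::]].
- exact: NPD HP.
- by move=> j _; apply: NPZ HP _ _ (Hgj j).
Qed.


Lemma case2 : (forall a, Rg 1 a -> P a) -> ~ NP P (g ord0).
Proof.
move=> H1 [t [Ht HPMt]].
have [t0 [Ht0 Htt0]] := decomp0 H1 t.
have Nt0 : ~ P t0.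
  move=> H; apply: Ht; rewrite -(subrK t0 t); apply: PD => //.
have Nm0 : ~ m0 t0.
  by move=> H; apply: Nt0; apply: (m0_in_prime HR Hloc Hart HP H).
have [b [Hb Htb]] := unit0 Hloc Ht0 Nm0.
have HPg : PM P (g ord0).
  have -> : g ord0 = b *: (t *: g ord0 - (t - t0) *: g ord0).
    by rewrite -scalerBl opprB addrC subrK scalerA mulrC Htb scale1r.
  apply: PMZ => //; apply: PMB => //; exact: PM_gen.
have [a [Ha Hga]] := PM_index HPg.
have Hcomp : forall j, exists Nc : nat * (nat -> R),
    (forall n, Rg n (Nc.2 n)) /\ (forall n, P (Nc.2 n)) /\ a j = \sum_(n < Nc.1) Nc.2 n.
  move=> j; case: HR => _ _ _ Hdec _; have [N [c [Hc Heq]]] := Hdec (a j).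
  exists (N, fun n => if (n < N)%N then c n else 0); split=> [n|].
    by rewrite /=; case: ifP => _ //; have := Rg0 HR n.
  split=> [n|].
    rewrite /=; case: ifPn => Hn; last by have := P0 HP.
    by apply: (HPh Hc) Hn; rewrite -Heq.
  by rewrite Heq; apply: eq_bigr => i _ /=; rewrite ltn_ord.
pose F j := proj1_sig (constructive_indefinite_description _ (Hcomp j)).
have HF : forall j, (forall n, Rg n ((F j).2 n)) /\ (forall n, P ((F j).2 n)) /\
    a j = \sum_(n < (F j).1) (F j).2 n.
  by move=> j; rewrite /F; case: constructive_indefinite_description.
pose N := (\max_j (F j).1)%N.
pose c j n := if (n < (F j).1)%N then (F j).2 n else 0.
have Hc_rg : forall j n, Rg n (c j n).
  by move=> j n; rewrite /c; case: ifP => _; [case: (HF j)|have := Rg0 HR n].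
have Hc_P : forall j n, P (c j n).
  by move=> j n; rewrite /c; case: ifP => _; [case: (HF j) => _ []|have := P0 HP].
have Haj : forall j, a j = \sum_(n < N) c j n.
  move=> j; case: (HF j) => _ [_ ->].
  rewrite (big_ord_widen N (fun n => (F j).2 n)); last by apply: (leq_bigmax j).
  by rewrite big_mkcond.
pose deg (p : 'I_s.+1 * 'I_N) := ((p.2 : nat)%:Z + d p.1).
pose w (p : 'I_s.+1 * 'I_N) := c p.1 p.2 *: g p.1.
have Hw : forall p, Mg (deg p) (w p) by move=> p; apply: (MgZ HM).
have Hsum : g ord0 = \sum_p w p.
  rewrite {1}Hga.
  have -> : \sum_j a j *: g j = \sum_j \sum_(n < N) c j n *: g j.
    by apply: eq_bigr => j _; rewrite Haj scaler_suml.
  by rewrite pair_big.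
have Hproj := Mg_proj HM Hw (Hg ord0) Hsum.
pose bb j := \sum_(n < N | (n%:Z + d j == d ord0)) c j n.
have Hgb : g ord0 = \sum_j bb j *: g j.
  rewrite {1}Hproj.
  have -> : \sum_(p | deg p == d ord0) w p =
     \sum_(p : 'I_s.+1 * 'I_N | true && (((p.2 : nat)%:Z + d p.1) == d ord0)) c p.1 p.2 *: g p.1 by [].
  rewrite -(pair_big_dep (fun _ => true) (fun j (n : 'I_N) => ((n : nat)%:Z + d j) == d ord0)
      (fun j (n : 'I_N) => c j n *: g j)) /=.
  by apply: eq_bigr => j _; rewrite /bb scaler_suml.
have HbP : forall j, P (bb j).
  move=> j; apply: big_ind => //; [exact: P0 HP|exact: PD].
have Hb0 : Rg 0 (bb ord0).
  apply: big_ind => //; [exact: (Rg0 HR 0)|exact: (RgD HR)|].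
  move=> n /eqP Hn.
  have Hn0 : (n : nat) = 0%N.
    have : (n : nat)%:Z = 0 by apply: (addIr (d ord0)); rewrite add0r.
    by case.
  by have := Hc_rg ord0 n; rewrite Hn0.
have Hm0b : m0 (bb ord0).
  apply: NNPP => Hn; have [b' [_ Hbb']] := unit0 Hloc Hb0 Hn.
  apply: (P1 HP); rewrite -Hbb'; apply: (PMr HP); exact: HbP.
have [u [_ Hu]] := unit0 Hloc (RgB HR (Rg1 HR) Hb0) (notm0_1sub HR Hloc Hm0b).
have Hg0' : g ord0 = \sum_(j | j != ord0) (u * bb j) *: g j.
  have Hs : (1 - bb ord0) *: g ord0 = \sum_(j | j != ord0) bb j *: g j.
    rewrite scalerBl scale1r {1}Hgb (bigD1 ord0) //=.
    by rewrite addrAC subrr add0r.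
  rewrite -[g ord0]scale1r -Hu mulrC -scalerA Hs scaler_sumr.
  by apply: eq_bigr => j _; rewrite scalerA.
case: Hmin => _ /(_ ord0) [m Hm]; apply: Hm.
have [e He] := gen_index m.
exists (fun j => if j == ord0 then 0 else e j + e ord0 * (u * bb j)).
split; first by rewrite eqxx.
have He0 : e ord0 *: g ord0 = \sum_(j | j != ord0) (e ord0 * (u * bb j)) *: g j.
  rewrite {1}Hg0' scaler_sumr; apply: eq_bigr => j _; by rewrite scalerA.
rewrite He (bigD1 ord0) //= [in RHS](bigD1 ord0) //= scale0r add0r He0.
rewrite -big_split /=; apply: eq_bigr => j Hj.
by rewrite (negbTE Hj) scalerDl addrC.
Qed.

End Cases.


Lemma pigeon (Q : nat -> nat -> Prop) m :
  (forall j, (j < m)%N -> forall a b, Q j a -> Q j b -> a = b) ->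
  forall L : seq nat, uniq L -> (m < size L)%N ->
  exists x, x \in L /\ forall j, (j < m)%N -> ~ Q j x.
Proof.
elim: m => [|m IH] Huniq L UL HL.
  by case: L UL HL => // x L _ _; exists x; rewrite mem_head.
have Hu' : forall j, (j < m)%N -> forall a b, Q j a -> Q j b -> a = b.
  by move=> j Hj; apply: Huniq; apply: ltnW.
case: (classic (exists x, x \in L /\ Q m x)) => [[x0 [Hx0 Qx0]]|Hno].
  have Ur : uniq (rem x0 L) by apply: rem_uniq.
  have Sr : (m < size (rem x0 L))%N by rewrite size_rem // -ltnS (ltn_predK HL).
  have [x [Hx Hj]] := IH Hu' _ Ur Sr.
  move: Hx; rewrite (mem_rem_uniq _ UL) inE => /andP [Hne HxL].
  exists x; split=> // j; rewrite ltnS leq_eqVlt => /orP [/eqP ->|Hj'].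
    by move=> Qx; move: Hne; rewrite (Huniq m (ltnSn m) _ _ Qx Qx0) eqxx.
  exact: Hj.
have [x [Hx Hj]] := IH Hu' _ UL (ltnW HL).
exists x; split=> // j; rewrite ltnS leq_eqVlt => /orP [/eqP ->|Hj'].
  by move=> Qx; apply: Hno; exists x.
exact: Hj.
Qed.

Section Avoid.
Variable R : comNzRingType.
Variable Rg : nat -> R -> Prop.
Variable m0 : R -> Prop.
Hypothesis HR : graded_ring Rg.
Hypothesis Hloc : local0 Rg m0.
Variable M : lmodType R.
Variable W : M -> Prop.
Hypothesis W0 : W 0.
Hypothesis WD : forall a b, W a -> W b -> W (a + b).
Hypothesis WZ : forall r a, Rg 0 r -> W a -> W (r *: a).
Variable n : nat.
Variable N : 'I_n -> M -> Prop.
Hypothesis NB : forall i a b, N i a -> N i b -> N i (a - b).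
Hypothesis NZ : forall i r a, N i a -> N i (r *: a).
Variable f : nat -> R.
Hypothesis Hf : forall k, Rg 0 (f k).
Hypothesis Hfd : forall i j, m0 (f i - f j) -> i = j.

Lemma avoid (l : seq 'I_n) : exists w, W w /\
  forall i, i \in l -> (exists w', W w' /\ ~ N i w') -> ~ N i w.
Proof.
elim: l => [|i l [y [Wy Hy]]]; first by exists 0.
case: (classic (exists w', W w' /\ ~ N i w')) => [[yi [Wyi Nyi]]|Hno]; last first.
  exists y; split=> // i0; rewrite inE => /orP [/eqP -> /Hno //|]; exact: Hy.
case: (classic (N i y)) => Niy; last first.
  exists y; split=> // i0; rewrite inE => /orP [/eqP -> //|]; exact: Hy.
pose z k := yi + f k *: y.
pose Q j k := (exists w', W w' /\ ~ N (nth i l j) w') /\ N (nth i l j) (z k).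
have HQ : forall j, (j < size l)%N -> forall a b, Q j a -> Q j b -> a = b.
  move=> j Hj a b [Hw Ha] [_ Hb]; apply: NNPP => Hab.
  have Hm : ~ m0 (f a - f b) by move=> /Hfd.
  have [u [_ Hu]] := unit0 Hloc (RgB HR (Hf a) (Hf b)) Hm.
  apply: (Hy _ (mem_nth i Hj) Hw).
  have := NZ u (NB Ha Hb).
  by rewrite /z opprD addrACA subrr add0r -scalerBl scalerA mulrC Hu scale1r.
have Hsz : (size l < size (iota 0 (size l).+1))%N by rewrite size_iota.
have [k [_ Hk]] := pigeon HQ (iota_uniq 0 (size l).+1) Hsz.
exists (z k); split; first by apply: WD => //; apply: WZ.
move=> i0; rewrite inE => /orP [/eqP -> _|Hi0 Hw].
  move=> Hz; apply: Nyi; have := NB Hz (NZ (f k) Niy); by rewrite /z addrK.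
move=> Hz; apply: (Hk (index i0 l)); first by rewrite index_mem.
by rewrite /Q nth_index.
Qed.
End Avoid.

Unset Implicit Arguments.

Theorem lemma4p2 (R : comNzRingType) (Rg : nat -> R -> Prop) (m0 : R -> Prop)
  (M : lmodType R) (Mg : int -> M -> Prop)
  (s : nat) (g : 'I_s.+1 -> M) (d : 'I_s.+1 -> int)
  (n : nat) (P : 'I_n -> R -> Prop) :
  graded_ring Rg -> standard_graded Rg -> noetherian R ->
  local0 Rg m0 -> artinian0 Rg -> infinite_residue Rg m0 ->
  graded_module Rg Mg ->
  (forall i, Mg (d i) (g i)) ->
  (forall i j : 'I_s.+1, (i <= j)%N -> d j <= d i) ->
  minimal_generators g ->
  (forall i, is_prime_ideal (P i) /\ homogeneous_ideal Rg (P i)) ->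
  exists x : M, Mg (d ord0) x /\
    forall i : 'I_n,
      forall k, mu_loc_quot (P i) (@nil M) k -> mu_loc_quot (P i) [:: x] k.-1.
Proof.
move=> HR HS _ Hloc Hart [f [Hf Hfd]] HM Hg Hord Hmin HPi.
have key : forall i, (exists m : M, ~ NP (P i) m) ->
    exists y, Mg (d ord0) y /\ ~ NP (P i) y.
  move=> i Hm; have [HP HPh] := HPi i.
  case: (classic (exists r, Rg 1%N r /\ ~ P i r)) => [[r [Hr Nr]]|Hno].
    exact: (case1 HR HM Hg Hord Hmin HP Hr Nr Hm).
  exists (g ord0); split; first exact: Hg.
  apply: (case2 HR HS Hloc Hart HM Hg Hmin HP HPh).
  by move=> a Ha; apply: NNPP => Na; apply: Hno; exists a.
have W0 : Mg (d ord0) 0 by exact: (Mg0 HM (d ord0)).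
have WD : forall a b, Mg (d ord0) a -> Mg (d ord0) b -> Mg (d ord0) (a + b).
  by move=> a b; apply: (MgD HM).
have WZ : forall r a, Rg 0%N r -> Mg (d ord0) a -> Mg (d ord0) (r *: a).
  by move=> r a; apply: (MgZ0 HM).
have NB : forall i (a b : M), NP (P i) a -> NP (P i) b -> NP (P i) (a - b).
  by move=> i a b; apply: NPB; case: (HPi i).
have NZ : forall i r (a : M), NP (P i) a -> NP (P i) (r *: a).
  by move=> i r a; apply: NPZ; case: (HPi i).
have [x [Wx Hx]] := avoid HR Hloc W0 WD WZ NB NZ Hf Hfd (enum 'I_n).
exists x; split=> // i k Hmu.
have HP := proj1 (HPi i).
case: k Hmu => [|k] Hmu; first exact: mu_zero.
apply: (mu_step HP Hmu); apply: Hx; first by rewrite mem_enum.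
exact: key (nakayama HP Hmu (ltn0Sn k)).
Qed.
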